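(* Let $\Gamma$ be a group and $S$ a $\Gamma$-graded inverse semigroup. Then $S$ is strongly graded if and only if the categories $\mathrm{Gr}\text{-}S$ and $\mathrm{Mod}\text{-}S_\varepsilon$ are equivalent via the restriction functor $(-)_\varepsilon$ and the induction functor $S\otimes_{S_\varepsilon}-$, together with the natural transformations $\mu:(S\otimes_{S_\varepsilon}-)_\varepsilon\to 1_{\mathrm{Mod}\text{-}S_\varepsilon}$ and $\nu: S\otimes_{S_\varepsilon}(-)_\varepsilon\to 1_{\mathrm{Gr}\text{-}S}$ given by $\mu_Y(s\otimes y)=sy$ and $\nu_X(s\otimes x)=sx$.
   Context: All semigroups have a zero. $\varepsilon$ is the identity of $\Gamma$. $S$ is $\Gamma$-graded if there is $\deg:S\setminus\{0\}\to\Gamma$ with $\deg(st)=\deg(s)\deg(t)$ whenever $st\neq0$; $S_\alpha=\deg^{-1}(\alpha)\cup\{0\}$; $S_\varepsilon$ is a subsemigroup. $S$ is strongly graded if $S_\alpha S_\beta=S_{\alpha\beta}$ for all $\alpha,\beta$. Left $S$-sets are pointed ($0_X$ with $0x=0_X$) and unital ($SX=X$); $\mathrm{Mod}\text{-}T$ is the category of unital pointed left $T$-sets with $T$-maps ($\phi(tx)=t\phi(x)$); a left $S$-set $X$ is $\Gamma$-graded if there is $\deg:X\setminus\{0_X\}\to\Gamma$ with $\deg(sx)=\deg(s)\deg(x)$ whenever $sx\neq0_X$, $X_\alpha=\deg^{-1}(\alpha)\cup\{0_X\}$; $\mathrm{Gr}\text{-}S$ has these as objects and graded $S$-maps ($\phi(X_\alpha)\subseteq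 Y_\alpha$) as morphisms. The restriction functor sends $X$ to $X_\varepsilon$ (a left $S_\varepsilon$-set) and $\phi$ to $\phi|_{X_\varepsilon}$. For a left $S_\varepsilon$-set $Y$, $S\otimes_{S_\varepsilon}Y$ is $S\times Y$ modulo the equivalence relation generated by $(st,y)\sim(s,ty)$ for $t\in S_\varepsilon$, with class of $(s,y)$ written $s\otimes y$, left $S$-action $r(s\otimes y)=rs\otimes y$, zero $0\otimes 0_Y$, and grading $(S\otimes_{S_\varepsilon}Y)_\alpha=\{s\otimes y:\deg(s)=\alpha\}\cup\{0\otimes 0_Y\}$ (i.e. $Y$ is given the trivial grading); the induction functor sends $Y$ to $S\otimes_{S_\varepsilon}Y$ and $\phi$ to $1_S\otimes\phi$, $s\otimes y\mapsto s\otimes\phi(y)$. *)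

(* Defs.v *)
From Stdlib Require Import Relations.
From Stdlib Require Import ssreflect ssrfun.
Set Implicit Arguments.
Unset Strict Implicit.

Record Group := {
  gcar :> Type;
  gmul : gcar -> gcar -> gcar;
  gone : gcar;
  ginv : gcar -> gcar;
  gmulA : forall a b c, gmul a (gmul b c) = gmul (gmul a b) c;
  gmul1 : forall a, gmul gone a = a;
  gmulV : forall a, gmul (ginv a) a = gone
}.

Record Semigroup0 := {
  scar :> Type;
  smul : scar -> scar -> scar;
  szero : scar;
  smulA : forall a b c, smul a (smul b c) = smul (smul a b) c;
  smul0l : forall a, smul szero a = szero;
  smul0r : forall a, smul a szero = szero
}.

Arguments smul {s}.
Arguments szero {s}.
Arguments gmul {g}.
Arguments gone {g}.

Definition inverse_semigroup (S : Semigroup0) : Prop :=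
  forall s : S, exists! t : S, smul (smul s t) s = s /\ smul (smul t s) t = t.

Section Graded.
Variables (G : Group) (S : Semigroup0) (deg : S -> G).

(* deg is only meaningful on S \ {0}; its value at 0 is irrelevant. *)
Definition graded : Prop :=
  forall s t : S, smul s t <> szero -> deg (smul s t) = gmul (deg s) (deg t).

Definition inS (a : G) (s : S) : Prop := s = szero \/ deg s = a.

Definition strongly_graded : Prop :=
  forall (a b : G) (u : S),
    inS (gmul a b) u <-> exists s t, inS a s /\ inS b t /\ u = smul s t.

Record SSet := {
  xcar :> Type;
  act : S -> xcar -> xcar;
  xzero : xcar;
  actA : forall s t x, act (smul s t) x = act s (act t x);
  act0 : forall x, act szero x = xzero;
  xunital : forall x, exists s x', x = act s x'
}.

Record GrSSet := {
  gset :> SSet;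
  gdeg : gset -> G;
  gdegP : forall s x, act s x <> xzero gset ->
            gdeg (act s x) = gmul (deg s) (gdeg x)
}.

Definition inX (X : GrSSet) (a : G) (x : X) : Prop :=
  x = xzero X \/ gdeg x = a.

(* Unital pointed left S_eps-sets (objects of Mod-S_eps).  The action is
   given as a function on S, but only its values on S_eps are used
   anywhere (axioms, tensor product, morphisms, mu). *)
Record SeSet := {
  ycar :> Type;
  yact : S -> ycar -> ycar;
  yzero : ycar;
  yactA : forall s t y, inS gone s -> inS gone t ->
            yact (smul s t) y = yact s (yact t y);
  yact0 : forall y, yact szero y = yzero;
  yunital : forall y, exists t y', inS gone t /\ y = yact t y'
}.

(* Tensor product S (x)_{S_eps} Y, where Y is the subset of a type T given
   by a predicate P and stable under the S_eps-action a: the equivalence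
   relation on S * T generated by (st, y) ~ (s, ty) for t in S_eps, P y.
   Elements of S (x) Y are the classes of pairs p with P p.2. *)
Inductive tstep (T : Type) (a : S -> T -> T) (P : T -> Prop) :
    S * T -> S * T -> Prop :=
  | tstep_intro (s t : S) (y : T) :
      inS gone t -> P y -> tstep a P (smul s t, y) (s, a t y).

Definition teq (T : Type) (a : S -> T -> T) (P : T -> Prop) :
    relation (S * T) := clos_refl_sym_trans _ (tstep a P).

(* mu_Y : (S (x) Y)_eps -> Y, s (x) y |-> s y, is a well-defined
   isomorphism in Mod-S_eps (has an inverse S_eps-map). *)
Definition mu_iso (Y : SeSet) : Prop :=
  let R := teq (@yact Y) (fun _ => True) in
  (forall p q : S * Y, inS gone p.1 -> inS gone q.1 -> R p q ->
       yact p.1 p.2 = yact q.1 q.2) /\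
  exists g : Y -> S * Y,
    (forall y, inS gone (g y).1) /\
    (forall y, yact (g y).1 (g y).2 = y) /\
    (forall p : S * Y, inS gone p.1 -> R (g (yact p.1 p.2)) p) /\
    (forall t y, inS gone t -> R (g (yact t y)) (smul t (g y).1, (g y).2)).

(* nu_X : S (x) X_eps -> X, s (x) x |-> s x, is a well-defined
   isomorphism in Gr-S (has an inverse graded S-map). *)
Definition nu_iso (X : GrSSet) : Prop :=
  let R := teq (@act X) (inX gone) in
  (forall p q : S * X, inX gone p.2 -> inX gone q.2 -> R p q ->
       act p.1 p.2 = act q.1 q.2) /\
  exists g : X -> S * X,
    (forall x, inX gone (g x).2) /\
    (forall x, act (g x).1 (g x).2 = x) /\
    (forall p : S * X, inX gone p.2 -> R (g (act p.1 p.2)) p) /\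
    (forall s x, R (g (act s x)) (smul s (g x).1, (g x).2)) /\
    (forall a x, inX a x ->
       exists p : S * X, inS a p.1 /\ inX gone p.2 /\ R (g x) p).

End Graded.

(* Main.v *)
Require Import Defs.
From Stdlib Require Import ssreflect ssrfun.
From Stdlib Require Import IndefiniteDescription Classical Relations.
Set Implicit Arguments.
Unset Strict Implicit.


Lemma gmulV' (G : Group) (a : G) : gmul a (ginv a) = gone.
Proof.
  rewrite -[gmul a _]gmul1 -[in gmul gone _](gmulV (ginv a)).
  rewrite -gmulA [gmul (ginv a) (gmul a _)]gmulA gmulV gmul1 gmulV //.
Qed.

Lemma gmul1r (G : Group) (a : G) : gmul a gone = a.
Proof. by rewrite -(gmulV a) gmulA gmulV' gmul1. Qed.

Lemma gcancl (G : Group) (a b c : G) : gmul a b = gmul a c -> b = c.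
Proof.
  move=> h. by rewrite -[b]gmul1 -(gmulV a) -gmulA h gmulA gmulV gmul1.
Qed.

Lemma gcancr (G : Group) (a b c : G) : gmul b a = gmul c a -> b = c.
Proof.
  move=> h. by rewrite -[b]gmul1r -(gmulV' a) gmulA h -gmulA gmulV' gmul1r.
Qed.

Definition sinv (S : Semigroup0) (H : inverse_semigroup S) (s : S) : S :=
  proj1_sig (constructive_indefinite_description _ (H s)).

Lemma sinvP (S : Semigroup0) (H : inverse_semigroup S) (s : S) :
  smul (smul s (sinv H s)) s = s /\ smul (smul (sinv H s) s) (sinv H s) = sinv H s.
Proof. rewrite /sinv; case: constructive_indefinite_description => t [h _] //. Qed.

Lemma sinvU (S : Semigroup0) (H : inverse_semigroup S) (s t : S) :
  smul (smul s t) s = s -> smul (smul t s) t = t -> t = sinv H s.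
Proof.
  move=> h1 h2. rewrite /sinv; case: constructive_indefinite_description => u [hu U] /=.
  by rewrite -(U t) ?(U u).
Qed.

Lemma sinv0 (S : Semigroup0) (H : inverse_semigroup S) : sinv H szero = szero.
Proof. symmetry; apply: sinvU; by rewrite !smul0l. Qed.

Lemma idem_prod (S : Semigroup0) (H : inverse_semigroup S) (e f : S) :
  smul e e = e -> smul f f = f -> smul (smul e f) (smul e f) = smul e f.
Proof.
  move=> he hf.
  have hez z : smul e (smul e z) = smul e z by rewrite smulA he.
  have hfz z : smul f (smul f z) = smul f z by rewrite smulA hf.
  set x := sinv H (smul e f).
  have [P1 P2] : smul (smul (smul e f) x) (smul e f) = smul e f /\ smul (smul x (smul e f)) x = x by exact: sinvP.
  have P1' : smul e (smul f (smul x (smul e f))) = smul e f.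
  { rewrite -[RHS]P1. by rewrite !smulA. }
  have P2' : smul x (smul e (smul f x)) = x.
  { rewrite -[RHS]P2. by rewrite !smulA. }
  have P2z z : smul x (smul e (smul f (smul x z))) = smul x z.
  { rewrite !smulA; congr (smul _ z); rewrite -!smulA; exact P2'. }
  have hx : smul f (smul x e) = x.
  { apply: sinvU; rewrite -!smulA.
    - by rewrite hfz hez.
    - by rewrite hez hfz P2z. }
  have xx : smul x x = x.
  { rewrite -{1}hx -{2}hx -!smulA P2z. by []. }
  have ex : smul e f = x.
  { have h1 : smul e f = sinv H x.
    { apply: sinvU; [exact P2 | exact P1]. }
    have h2 : x = sinv H x by apply: sinvU; rewrite !xx.
    by rewrite h1 -h2. }
  by rewrite ex xx.
Qed.

Lemma idem_comm (S : Semigroup0) (H : inverse_semigroup S) (e f : S) :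
  smul e e = e -> smul f f = f -> smul e f = smul f e.
Proof.
  move=> he hf.
  have hez z : smul e (smul e z) = smul e z by rewrite smulA he.
  have hfz z : smul f (smul f z) = smul f z by rewrite smulA hf.
  have I1 := idem_prod H he hf. have I2 := idem_prod H hf he.
  have I1' : smul e (smul f (smul e f)) = smul e f by rewrite -[RHS]I1 -!smulA.
  have I2' : smul f (smul e (smul f e)) = smul f e by rewrite -[RHS]I2 -!smulA.
  have h1 : smul f e = sinv H (smul e f).
  { apply: sinvU; rewrite -!smulA.
    - by rewrite hfz hez I1'.
    - by rewrite hez hfz I2'. }
  have h2 : smul e f = sinv H (smul e f).
  { apply: sinvU; by rewrite !I1. }
  by rewrite h2 -h1.
Qed.


Lemma smul_nz_l (S : Semigroup0) (s t : S) : smul s t <> szero -> s <> szero.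
Proof. move=> h e; apply: h; by rewrite e smul0l. Qed.
Lemma smul_nz_r (S : Semigroup0) (s t : S) : smul s t <> szero -> t <> szero.
Proof. move=> h e; apply: h; by rewrite e smul0r. Qed.

Lemma inS_mul (G : Group) (S : Semigroup0) (deg : S -> G) (a b : G) (s t : S) :
  graded deg -> inS deg a s -> inS deg b t -> inS deg (gmul a b) (smul s t).
Proof.
  move=> Hg hs ht. case: (classic (smul s t = szero)) => h; [by left | right].
  rewrite Hg //. case: hs => [e|->]; first by case: (smul_nz_l h).
  case: ht => [e|->] //; by case: (smul_nz_r h).
Qed.

Lemma inS_self (G : Group) (S : Semigroup0) (deg : S -> G) (s : S) : inS deg (deg s) s.
Proof. by right. Qed.

Lemma inS_deg (G : Group) (S : Semigroup0) (deg : S -> G) a (s : S) :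
  inS deg a s -> s <> szero -> deg s = a.
Proof. by case. Qed.

Lemma inS_0 (G : Group) (S : Semigroup0) (deg : S -> G) a : inS deg a szero.
Proof. by left. Qed.

Lemma inS_inv (G : Group) (S : Semigroup0) (deg : S -> G) (H : inverse_semigroup S) a (s : S) :
  graded deg -> inS deg a s -> inS deg (ginv a) (sinv H s).
Proof.
  move=> Hg hs. case: (classic (s = szero)) => h0.
  { rewrite h0 sinv0; by left. }
  right. have da := inS_deg hs h0.
  have [P1 _] := sinvP H s.
  have h1 : smul (smul s (sinv H s)) s <> szero by rewrite P1.
  have h2 := smul_nz_l h1.
  have := f_equal deg P1. rewrite Hg // Hg //.
  rewrite da -[X in _ = X]gmul1 => /gcancr e.
  by rewrite -[LHS]gmul1 -(gmulV a) -gmulA e gmul1r.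
Qed.


Lemma mu_wd (G : Group) (S : Semigroup0) (deg : S -> G) (Y : SeSet deg) :
  graded deg ->
  forall p q : S * Y, inS deg gone p.1 -> inS deg gone q.1 ->
    teq deg (@yact _ _ _ Y) (fun _ => True) p q -> yact p.1 p.2 = yact q.1 q.2.
Proof.
  move=> Hg.
  pose Phi (p : S * Y) (y0 : Y) :=
    (inS deg gone p.1 /\ yact p.1 p.2 = y0) \/ (~ inS deg gone p.1 /\ y0 = yzero Y).
  suff K : forall p q, teq deg (@yact _ _ _ Y) (fun _ => True) p q ->
             forall y0, Phi p y0 <-> Phi q y0.
  { move=> p q hp hq R. have [] := proj1 (K p q R (yact p.1 p.2)).
    - by left.
    - by case=> _ ->.
    - by case. }
  move=> p q; elim=> {p q}.
  - move=> p q [] s t y ht _ y0 /=. rewrite /Phi /=.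
    case: (classic (inS deg gone s)) => hs.
    + have hst : inS deg gone (smul s t) by rewrite -(gmul1 gone); exact: inS_mul.
      rewrite yactA //. tauto.
    + case: (classic (smul s t = szero)) => h0.
      * rewrite h0 yact0. have := inS_0 deg gone (S:=S). split.
        -- case; [case=> _ <-; by right | by case].
        -- case; [by case | case=> _ ->; left; by split].
      * have hst : ~ inS deg gone (smul s t).
        { case=> // e. apply: hs; right. move: e; rewrite Hg //.
          rewrite (inS_deg ht (smul_nz_r h0)) gmul1r //. }
        tauto.
  - move=> p y0; tauto.
  - move=> p q _ IH y0. by rewrite IH.
  - move=> p q r _ IH1 _ IH2 y0. by rewrite IH1 IH2.
Qed.

Lemma sinv_idem (S : Semigroup0) (H : inverse_semigroup S) (t : S) :
  smul (smul t (sinv H t)) (smul t (sinv H t)) = smul t (sinv H t).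
Proof. by rewrite smulA (proj1 (sinvP H t)). Qed.

Lemma inS_tinv (G : Group) (S : Semigroup0) (deg : S -> G) (H : inverse_semigroup S) (t : S) :
  graded deg -> inS deg gone t -> inS deg gone (smul t (sinv H t)).
Proof.
  move=> Hg ht. rewrite -(gmulV' (gone : G)). apply: inS_mul => //. exact: inS_inv.
Qed.

Lemma mu_iso_holds (G : Group) (S : Semigroup0) (deg : S -> G) (Y : SeSet deg) :
  graded deg -> inverse_semigroup S -> mu_iso Y.
Proof.
  move=> Hg H. split; first exact: mu_wd.
  set R := teq deg (@yact _ _ _ Y) (fun _ => True).
  have Rstep : forall s t (y : Y), inS deg gone t -> R (smul s t, y) (s, yact t y).
  { move=> s t y ht. apply: rst_step. by constructor. }
  have Rsym : forall p q, R p q -> R q p by move=> p q; apply: rst_sym.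
  have Rtr : forall p q r, R p q -> R q r -> R p r by move=> p q r; apply: rst_trans.
  have KY : forall e f (y : Y), inS deg gone e -> inS deg gone f ->
      smul e e = e -> smul f f = f -> yact e y = y -> yact f y = y -> R (e, y) (f, y).
  { move=> e f y he hf ee ff ey fy.
    have h1 := Rstep e f y hf. rewrite fy in h1.
    have h2 := Rstep f e y he. rewrite ey in h2.
    rewrite (idem_comm H ee ff) in h1.
    exact: Rtr (Rsym _ _ h1) h2. }
  have E : forall y : Y, exists e, inS deg gone e /\ smul e e = e /\ yact e y = y.
  { move=> y. have [t [y' [ht ->]]] := yunital y.
    exists (smul t (sinv H t)). split; first exact: inS_tinv.
    split; first exact: sinv_idem.
    rewrite -yactA ?(proj1 (sinvP H t)) //. exact: inS_tinv. }
  pose f (y : Y) := proj1_sig (constructive_indefinite_description _ (E y)).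
  have fP : forall y, inS deg gone (f y) /\ smul (f y) (f y) = f y /\ yact (f y) y = y.
  { move=> y. rewrite /f. by case: constructive_indefinite_description. }
  have K3 : forall s (z : Y), inS deg gone s -> R (f (yact s z), yact s z) (s, z).
  { move=> s z hs.
    have h1 := Rstep (smul s (sinv H s)) s z hs.
    rewrite (proj1 (sinvP H s)) in h1.
    have [f1 [f2 f3]] := fP (yact s z).
    apply: Rtr (Rsym _ _ h1). apply: KY => //.
    - exact: inS_tinv.
    - exact: sinv_idem.
    - rewrite -yactA ?(proj1 (sinvP H s)) //. exact: inS_tinv. }
  exists (fun y => (f y, y)); split; [|split; [|split]].
  - move=> y; exact: (proj1 (fP y)).
  - move=> y; exact: (proj2 (proj2 (fP y))).
  - case=> s z /= hs. exact: K3.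
  - move=> t y ht /=. apply: Rtr (K3 t y ht) _.
    have := Rstep t (f y) y (proj1 (fP y)). rewrite (proj2 (proj2 (fP y))).
    exact: Rsym.
Qed.


Lemma act_zero (S : Semigroup0) (X : SSet S) (s : S) : act s (xzero X) = xzero X.
Proof. by rewrite -{1}(act0 (xzero X)) -actA smul0r act0. Qed.

Lemma nu_wd (G : Group) (S : Semigroup0) (deg : S -> G) (X : GrSSet deg) :
  forall p q : S * X, teq deg (@act _ X) (inX gone) p q -> act p.1 p.2 = act q.1 q.2.
Proof.
  move=> p q; elim=> {p q}.
  - move=> p q [] s t y _ _ /=. by rewrite actA.
  - by [].
  - by move=> p q _ ->.
  - by move=> p q r _ -> _ ->.
Qed.

Lemma sinv1' (S : Semigroup0) (H : inverse_semigroup S) (s : S) :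
  smul s (smul (sinv H s) s) = s.
Proof. by rewrite smulA (proj1 (sinvP H s)). Qed.

Lemma inS_is (G : Group) (S : Semigroup0) (deg : S -> G) (H : inverse_semigroup S) (s : S) :
  graded deg -> inS deg gone (smul (sinv H s) s).
Proof.
  move=> Hg. rewrite -(gmulV (deg s)). apply: inS_mul => //; [apply: inS_inv => // |]; exact: inS_self.
Qed.

Lemma inS_si (G : Group) (S : Semigroup0) (deg : S -> G) (H : inverse_semigroup S) (s : S) :
  graded deg -> inS deg gone (smul s (sinv H s)).
Proof.
  move=> Hg. rewrite -(gmulV' (deg s)). apply: inS_mul => //; [|apply: inS_inv => //]; exact: inS_self.
Qed.

Lemma nu_inj (G : Group) (S : Semigroup0) (deg : S -> G) (X : GrSSet deg) :
  graded deg -> inverse_semigroup S ->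
  forall p q : S * X, inX gone p.2 -> inX gone q.2 -> act p.1 p.2 = act q.1 q.2 ->
    teq deg (@act _ X) (inX gone) p q.
Proof.
  move=> Hg H.
  set R := teq deg (@act _ X) (inX gone).
  have Rstep : forall s t (y : X), inS deg gone t -> inX gone y -> R (smul s t, y) (s, act t y).
  { move=> s t y ht hy. apply: rst_step. by constructor. }
  have Rsym : forall p q, R p q -> R q p by move=> p q; apply: rst_sym.
  have Rtr : forall p q r, R p q -> R q r -> R p r by move=> p q r; apply: rst_trans.
  have Z : forall (s : S) (z : X), inX gone z -> act s z = xzero X -> R (s, z) (szero, xzero X).
  { move=> s z hz e.
    have h1 := Rstep s _ z (inS_is H s Hg) hz. rewrite sinv1' actA e act_zero in h1.
    have h2 := Rstep s szero (xzero X) (inS_0 deg gone) (or_introl erefl).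
    rewrite smul0r act0 in h2.
    exact: Rtr h1 (Rsym _ _ h2). }
  have SA : forall (s f : S) (z : X), inX gone z -> inS deg gone f -> smul f f = f ->
      act f (act s z) = act s z -> R (s, z) (smul f s, z).
  { move=> s f z hz hf ff fx.
    set i := sinv H s.
    have hw : inS deg gone (smul i (smul f s)).
    { have -> : (gone : G) = gmul (ginv (deg s)) (gmul gone (deg s)) by rewrite gmul1 gmulV.
      apply: inS_mul => //; [apply: inS_inv => // | apply: inS_mul => //]; exact: inS_self. }
    have h1 := Rstep s _ z hw hz.
    have e1 : smul s (smul i (smul f s)) = smul f s.
    { rewrite !smulA (idem_comm H (sinv_idem H s) ff).
      by rewrite -!smulA sinv1'. }
    rewrite e1 !actA fx in h1.
    have h2 := Rstep s _ z (inS_is H s Hg) hz. rewrite sinv1' actA in h2.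
    exact: Rtr h2 (Rsym _ _ h1). }
  case=> s z [s' z'] /= hz hz' e.
  case: (classic (act s z = xzero X)) => x0.
  { apply: Rtr (Z s z hz x0) (Rsym _ _ (Z s' z' hz' _)). by rewrite -e. }
  set i' := sinv H s'.
  have degs : forall (t : S) (y : X), inX gone y -> act t y <> xzero X -> deg t = gdeg (act t y).
  { move=> t y hy ne. rewrite gdegP //. case: hy => [ey|->]; last by rewrite gmul1r.
    case: ne; by rewrite ey act_zero. }
  have d1 := degs s z hz x0. have d2 := degs s' z' hz' (ltac:(by rewrite -e)).
  have hw : inS deg gone (smul i' s).
  { rewrite -(gmulV (deg s')). apply: inS_mul => //. apply: inS_inv => //. exact: inS_self.
    rewrite d2 -e -d1; exact: inS_self. }
  have h0 := SA s (smul s' i') z hz (inS_si H s' Hg) (sinv_idem H s').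
  have fx : act (smul s' i') (act s z) = act s z.
  { by rewrite e -actA (proj1 (sinvP H s')). }
  have h0' := h0 fx.
  have h1 := Rstep s' _ z hw hz. rewrite smulA actA e -actA in h1.
  have h2 := Rstep s' _ z' (inS_is H s' Hg) hz'. rewrite sinv1' in h2.
  apply: Rtr h0' (Rtr _ _ _ h1 (Rsym _ _ h2)).
Qed.


Lemma nu_surj (G : Group) (S : Semigroup0) (deg : S -> G) (X : GrSSet deg) :
  graded deg -> strongly_graded deg -> forall x : X,
  exists p : S * X, inX gone p.2 /\ act p.1 p.2 = x /\ (forall a, inX a x -> inS deg a p.1).
Proof.
  move=> Hg Hs x.
  case: (classic (x = xzero X)) => x0.
  { exists (szero, xzero X); split; [by left | split; [by rewrite act0 | by move=> a _; left]]. }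
  have [s [x' ex]] := xunital x.
  have s0 : s <> szero by move=> e; apply: x0; rewrite ex e act0.
  have x'0 : x' <> xzero X by move=> e; apply: x0; rewrite ex e act_zero.
  have dx : gdeg x = gmul (deg s) (gdeg x') by rewrite ex gdegP // -ex.
  set a := gdeg x.
  have hs : inS deg (gmul a (gmul (ginv a) (deg s))) s.
  { rewrite gmulA gmulV' gmul1; exact: inS_self. }
  have [u [w [hu [hw esw]]]] := proj1 (Hs _ _ s) hs.
  exists (u, act w x'); split; [|split].
  - rewrite /inX /=. case: (classic (act w x' = xzero X)) => z0; [by left | right].
    rewrite gdegP //. have w0 : w <> szero by move=> e; apply: z0; rewrite e act0.
    rewrite (inS_deg hw w0) -gmulA -dx gmulV //.
  - by rewrite /= -actA -esw ex.
  - move=> b [//|<-] /=. exact: hu.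
Qed.

Lemma nu_iso_holds (G : Group) (S : Semigroup0) (deg : S -> G) (X : GrSSet deg) :
  graded deg -> inverse_semigroup S -> strongly_graded deg -> nu_iso X.
Proof.
  move=> Hg H Hs. split.
  { move=> p q _ _; exact: nu_wd. }
  pose g (x : X) := proj1_sig (constructive_indefinite_description _ (nu_surj Hg Hs x)).
  have gP : forall x, inX gone (g x).2 /\ act (g x).1 (g x).2 = x /\
                      (forall a, inX a x -> inS deg a (g x).1).
  { move=> x; rewrite /g; by case: constructive_indefinite_description. }
  exists g; split; [|split; [|split; [|split]]].
  - move=> x; exact: (proj1 (gP x)).
  - move=> x; exact: (proj1 (proj2 (gP x))).
  - move=> p hp. apply: nu_inj => //; first exact: (proj1 (gP _)).
    exact: (proj1 (proj2 (gP _))).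
  - move=> s x. apply: nu_inj => //; first exact: (proj1 (gP _)).
    + exact: (proj1 (gP _)).
    + by rewrite /= (proj1 (proj2 (gP _))) actA (proj1 (proj2 (gP _))).
  - move=> a x hx. exists (g x); split; [exact: (proj2 (proj2 (gP x))) | split].
    + exact: (proj1 (gP x)).
    + exact: rst_refl.
Qed.

Definition shiftX (G : Group) (S : Semigroup0) (deg : S -> G) (H : inverse_semigroup S)
  (Hg : graded deg) (b : G) : GrSSet deg.
Proof.
  unshelve refine (@Build_GrSSet G S deg (@Build_SSet S S smul szero _ _ _) (fun x => gmul (deg x) b) _).
  - move=> s t x /=. by rewrite smulA.
  - exact: smul0l.
  - move=> x. exists x, (smul (sinv H x) x). by rewrite sinv1'.
  - move=> s x /= h. by rewrite Hg // gmulA.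
Defined.

Lemma converse (G : Group) (S : Semigroup0) (deg : S -> G) :
  graded deg -> inverse_semigroup S -> (forall X : GrSSet deg, nu_iso X) -> strongly_graded deg.
Proof.
  move=> Hg H Hnu a b u. split; last first.
  { case=> [s [t [hs [ht ->]]]]. exact: inS_mul. }
  case=> [->|du].
  { exists szero, szero; split; [by left|split; [by left|by rewrite smul0l]]. }
  set X := shiftX H Hg (ginv b).
  have [wd [g [g1 [g2 [_ [_ g5]]]]]] := Hnu X.
  have hu : @inX _ _ _ X a u.
  { right. rewrite /= du -gmulA gmulV' gmul1r //. }
  have [[s t] [hs [ht R]]] := g5 a u hu.
  exists s, t; split; first exact: hs. split.
  - move: (ht) => /= [->|e]; [by left | right]. apply: (gcancr (a := ginv b)). rewrite gmulV'; exact e.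
  - have := wd _ _ (g1 u) ht R. rewrite g2 //.
Qed.

Unset Implicit Arguments.
Theorem theorem5p8 (G : Group) (S : Semigroup0) (deg : S -> G) :
  graded deg -> inverse_semigroup S ->
  (strongly_graded deg <->
     (forall Y : SeSet deg, mu_iso Y) /\ (forall X : GrSSet deg, nu_iso X)).
Proof.
  move=> Hg H. split.
  - move=> Hs. split=> [Y|X]; [exact: mu_iso_holds | exact: nu_iso_holds].
  - case=> _ Hnu. exact: converse.
Qed.
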